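(* Let $\Gamma$ be a connected, non-complete distance-regular graph with fundamental group $G$ (as defined in the context), let $m,n>1$ be integers, and let $\rho: G\to S_{mn}$ be a transitive permutation representation such that $G\rho$ is imprimitive with $m$ blocks of imprimitivity, each of size $n$. Suppose that the associated cover $\Gamma_\rho$ is a distance-regular antipodal $mn$-cover of $\Gamma$. Let $\sigma: G\to S_m$ be the transitive action of $G\rho$ on its $m$ blocks of imprimitivity. Then $\Gamma_\rho$ is an $n$-cover of the $m$-cover $\Gamma_\sigma$ of $\Gamma$, and $\Gamma_\sigma$ is an antipodal distance-regular $m$-cover of $\Gamma$.
   Context: All graphs are finite, undirected, without loops or multiple edges. A graph $\Gamma$ is viewed as an abstract 2-dimensional simplicial complex whose 0-, 1-, 2-simplices are its vertices, edges and triangles. A cover of $\Gamma$ is a pair $(\tilde\Gamma,\theta)$ with $\tilde\Gamma$ a graph and $\theta:V(\tilde\Gamma)\to V(\Gamma)$ a surjection such that: each fibre $v\theta^{-1}$ is a coclique; the union of two distinct fibres over a non-edge of $\Gamma$ is a coclique; the subgraph induced on two fibres over an edge of $\Gamma$ is a perfect matching; the subgraph induced on three fibres over a triangle of $\Gamma$ is a disjoint union of triangles. It is an $r$-cover if all fibres have size $r$. For non-complete $\Gamma$, an antipodal $r$-cover is a connected $r$-cover $\tilde\Gamma$ in which ''equal or at maximum distance in $\tilde\Gamma$'' is an equivalence relation on $V(\tilde\Gamma)$ whose classes are the fibres. Fundamental group: fix a spanning tree $T$ of the connected graph $\Gamma$. $G$ is the group generated by symbols $g_{v,w}$, one for each ordered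 pair $(v,w)$ with $\{v,w\}$ an edge, subject to the relations $g_{s,t}=1$ for each arc $(s,t)$ of $T$, $g_{v,w}g_{w,v}=1$ for each edge $\{v,w\}$, and $g_{x,y}g_{y,z}g_{z,x}=1$ for each triangle $\{x,y,z\}$ (its isomorphism type does not depend on $T$). For a transitive permutation representation $\rho:G\to S_r$ (acting on $\{1,\dots,r\}$ on the right), the cover $\Gamma_\rho$ has vertex set $V(\Gamma)\times\{1,\dots,r\}$, covering map $(v,i)\mapsto v$, and $(v,i)\sim(w,j)$ iff $\{v,w\}\in E(\Gamma)$ and $j=i\,(g_{v,w}\rho)$; it is a connected $r$-cover of $\Gamma$. If $G\rho$ has blocks $B_1,\dots,B_m$ and $\sigma$ is the action on blocks, then $\Gamma_\rho$ is an $n$-cover of $\Gamma_\sigma$ via $(v,i)\mapsto (v,k)$ where $i\in B_k$. *)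

(* Defs.v *)
From HB Require Import structures.
From mathcomp Require Import all_boot all_fingroup.
Set Implicit Arguments. Unset Strict Implicit. Unset Printing Implicit Defensive.

Section Graphs.
Variable T : finType.

Definition simple_graph (e : rel T) := symmetric e /\ irreflexive e.
Definition connected_graph (e : rel T) := forall x y, connect e x y.
Definition complete_graph (e : rel T) := forall x y, x != y -> e x y.

Fixpoint ball (e : rel T) (k : nat) (x : T) : {set T} :=
  if k is k'.+1 then ball e k' x :|: [set y | [exists z in ball e k' x, e z y]]
  else [set x].

(* graph distance (equal to #|T| when y is unreachable from x) *)
Definition dist (e : rel T) (x y : T) : nat :=
  find (fun k => y \in ball e k x) (iota 0 #|T|).

Definition diameter (e : rel T) : nat := \max_(p : T * T) dist e p.1 p.2.

Definition distance_regular (e : rel T) :=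
  connected_graph e /\
  exists c b : nat -> nat, forall x y,
    #|[set z | e y z & dist e x z == (dist e x y).-1]| = c (dist e x y) /\
    #|[set z | e y z & dist e x z == (dist e x y).+1]| = b (dist e x y).

End Graphs.

Section Covers.
Variable T : finType.

Definition is_cover (U : finType) (e : rel T) (eU : rel U) (th : U -> T) :=
  [/\ forall v, exists x, th x = v,
      forall x y, th x = th y -> ~~ eU x y,
      forall x y, th x != th y -> ~~ e (th x) (th y) -> ~~ eU x y,
      forall x w, e (th x) w -> #|[set y | (th y == w) && eU x y]| = 1 &
      forall x y z, e (th x) (th y) -> e (th y) (th z) -> e (th z) (th x) ->
                    eU x y -> eU x z -> eU y z].

Definition is_rcover (U : finType) (e : rel T) (eU : rel U) (th : U -> T) (r : nat) :=
  is_cover e eU th /\ forall v, #|[set x | th x == v]| = r.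

Definition antipodal_cover (U : finType) (e : rel T) (eU : rel U) (th : U -> T) (r : nat) :=
  [/\ ~ complete_graph e, connected_graph eU, is_rcover e eU th r &
      forall x y, (x == y) || (dist eU x y == diameter eU) = (th x == th y)].

(* spanning tree: symmetric connected spanning subgraph with |T|-1 edges *)
Definition spanning_tree (e t : rel T) :=
  [/\ symmetric t, subrel t e, connected_graph t &
      #|[set p : T * T | t p.1 p.2]| = 2 * (#|T|).-1].

(* A permutation representation rho : G -> S_r of the fundamental group G
   (defined w.r.t. the spanning tree t) is given by the images
   pi v w = g_{v,w} rho of the generators, subject to the defining relations.
   MathComp permutations act on the right: (p * q) i = q (p i). *)
Definition fund_rep (r : nat) (e t : rel T) (pi : T -> T -> {perm 'I_r}) :=
  [/\ forall s u, t s u -> pi s u = 1%g,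
      forall v w, e v w -> (pi v w * pi w v = 1)%g &
      forall x y z, e x y -> e y z -> e z x -> (pi x y * pi y z * pi z x = 1)%g].

Definition rep_group (r : nat) (e : rel T) (pi : T -> T -> {perm 'I_r}) :
  {set {perm 'I_r}} :=
  <<[set pi p.1 p.2 | p in [pred p : T * T | e p.1 p.2]]>>%g.

Definition cover_graph (r : nat) (e : rel T) (pi : T -> T -> {perm 'I_r}) :
  rel (T * 'I_r) :=
  fun p q => e p.1 q.1 && (q.2 == pi p.1 q.1 p.2).

End Covers.

(* Main.v *)
Require Import Defs.
From HB Require Import structures.
From mathcomp Require Import all_boot all_fingroup.
From mathcomp Require Import zify.
Set Implicit Arguments. Unset Strict Implicit. Unset Printing Implicit Defensive.

Section GraphLemmas.
Variable T : finType.
Variable e : rel T.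
Hypothesis esym : symmetric e.
Hypothesis econ : connected_graph e.

Lemma ball_le k l x : k <= l -> ball e k x \subset ball e l x.
Proof.
elim: l => [|l IH]; first by rewrite leqn0 => /eqP ->.
rewrite leq_eqVlt => /orP[/eqP -> //| ]; rewrite ltnS => /IH H.
apply: (subset_trans H); rewrite /= subsetUl //.
Qed.

Lemma ball_nbr k x y z : y \in ball e k x -> e y z -> z \in ball e k.+1 x.
Proof. by move=> Hy Hyz; rewrite /= in_setU; apply/orP; right; rewrite inE; apply/existsP; exists y; rewrite Hy. Qed.

Lemma ballSP k x y : y \in ball e k.+1 x -> y \in ball e k x \/ exists z, z \in ball e k x /\ e z y.
Proof.
rewrite /= in_setU => /orP[H|]; first by left.
by rewrite inE => /existsP[z /andP[Hz Hzy]]; right; exists z.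
Qed.

Lemma ball_shift k a b' : e a b' -> ball e k b' \subset ball e k.+1 a.
Proof.
move=> Hab; elim: k => [|k IH].
  by apply/subsetP => y; rewrite /= inE => /eqP ->; apply: (@ball_nbr 0 a a b'); rewrite /= ?inE.
apply/subsetP => y /ballSP [H|[z [Hz Hzy]]].
  by apply: (subsetP (ball_le _ (leqnSn _))); apply: (subsetP IH).
by apply: ball_nbr Hzy; apply: (subsetP IH).
Qed.

Lemma path_ball x p : path e x p -> last x p \in ball e (size p) x.
Proof.
elim/last_ind: p => [|p a IH]; first by rewrite /= inE.
rewrite rcons_path last_rcons size_rcons => /andP[/IH H Ha].
exact: ball_nbr H Ha.
Qed.

Lemma connect_ball x y : exists2 k, k < #|T| & y \in ball e k x.
Proof.
have /connectP [p Hp ->] := econ x y.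
case: (shortenP Hp) => p' Hp' Hu _.
exists (size p'); last exact: path_ball.
have := max_card (mem (x :: p')); rewrite (card_uniqP Hu) /=. by [].
Qed.

Lemma dist_le x y k : (dist e x y <= k) = (y \in ball e k x).
Proof.
set P := fun j => y \in ball e j x.
have Hhas : has P (iota 0 #|T|).
  case: (connect_ball x y) => k' Hk Hb; apply/hasP; exists k' => //; rewrite mem_iota /=. by [].
have Hlt : dist e x y < #|T| by rewrite /dist -[X in _ < X](size_iota 0) -has_find.
apply/idP/idP => H.
  have := nth_find 0 Hhas; rewrite -/(dist e x y) nth_iota // add0n => Hd.
  exact: (subsetP (ball_le x H)).
rewrite leqNgt; apply/negP => Hk.
have := before_find 0 Hk; rewrite nth_iota ?add0n; last exact: ltn_trans Hlt.
by rewrite /P H.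
Qed.

Lemma dist_lt x y : dist e x y < #|T|.
Proof.
case: (connect_ball x y) => k Hk Hb. by apply: leq_ltn_trans Hk; rewrite dist_le.
Qed.

Lemma dist0 x : dist e x x = 0.
Proof. by apply/eqP; rewrite -leqn0 dist_le /= inE. Qed.

Lemma dist_eq0 x y : dist e x y = 0 -> x = y.
Proof. move=> H; have : dist e x y <= 0 by rewrite H.
by rewrite dist_le /= inE => /eqP. Qed.

Lemma dist_nbr x y z : e y z -> dist e x z <= (dist e x y).+1.
Proof. by move=> H; rewrite dist_le; apply: ball_nbr H; rewrite -dist_le. Qed.

Lemma dist_shift a b' w : e a b' -> dist e a w <= (dist e b' w).+1.
Proof. by move=> H; rewrite dist_le; apply: (subsetP (ball_shift _ H)); rewrite -dist_le. Qed.

Lemma dist_pred x y k : dist e x y = k.+1 -> exists z, e z y /\ dist e x z = k.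
Proof.
move=> H; have : dist e x y <= k.+1 by rewrite H.
rewrite dist_le => /ballSP [|[z [Hz Hzy]]].
  by rewrite -dist_le H ltnn.
exists z; split => //; apply/eqP; rewrite eqn_leq dist_le Hz /=.
by rewrite -ltnS -H dist_nbr.
Qed.

Lemma dist_sym x y : dist e x y = dist e y x.
Proof.
suff H : forall x y, dist e y x <= dist e x y by apply/eqP; rewrite eqn_leq !H.
move=> {}x {}y; move Hn: (dist e x y) => n; elim: n y Hn => [|n IH] y Hn.
  by rewrite (dist_eq0 Hn) dist0.
have [z [Hzy Hz]] := dist_pred Hn.
apply: leq_trans (dist_shift x (_ : e y z)) _; first by rewrite esym.
by rewrite ltnS IH.
Qed.

Lemma dist_tri x y z : dist e x z <= dist e x y + dist e y z.
Proof.
move Hn: (dist e y z) => n; elim: n z Hn => [|n IH] z Hn.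
  by rewrite (dist_eq0 Hn) addn0.
have [w [Hwz Hw]] := dist_pred Hn.
apply: leq_trans (dist_nbr x Hwz) _; by rewrite addnS ltnS IH.
Qed.

Lemma nbr_dist x y z : e y z -> dist e x y <= (dist e x z).+1.
Proof. by move=> H; apply: dist_nbr; rewrite esym. Qed.

End GraphLemmas.


Section CoverLemmas.
Variables U W : finType.
Variable eU : rel U.
Variable eW : rel W.
Variable phi : U -> W.
Hypothesis hom : forall x y, eU x y -> eW (phi x) (phi y).
Hypothesis lift : forall x w, eW (phi x) w -> exists2 y, eU x y & phi y = w.

Lemma ball_cover k x w :
  (w \in ball eW k (phi x)) = [exists y, (phi y == w) && (y \in ball eU k x)].
Proof.
elim: k w => [|k IH] w.
  apply/idP/existsP => [|[y /andP[/eqP <-]]]; rewrite /= inE.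
    by move=> /eqP ->; exists x; rewrite /= inE !eqxx.
  by rewrite inE => /eqP ->.
apply/idP/existsP.
  move=> /(ballSP) [|[w0 [Hw0 Hw0w]]].
    rewrite IH => /existsP[y /andP[Hy Hb]]; exists y; rewrite Hy /=.
    exact: (subsetP (ball_le _ _ (leqnSn _))).
  move: Hw0; rewrite IH => /existsP[y0 /andP[/eqP Hy0 Hb]].
  rewrite -Hy0 in Hw0w; have [y Hy Hyw] := lift Hw0w.
  by exists y; rewrite Hyw eqxx /=; apply: ball_nbr Hy.
move=> [y /andP[/eqP <- /ballSP [Hb|[z [Hz Hzy]]]]].
  apply: (subsetP (ball_le _ _ (leqnSn _))); rewrite IH; apply/existsP; exists y; by rewrite eqxx.
apply: (@ball_nbr _ _ _ _ (phi z)); last exact: hom.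
by rewrite IH; apply/existsP; exists z; rewrite eqxx.
Qed.

Hypothesis eUsym : symmetric eU.
Hypothesis eWsym : symmetric eW.
Hypothesis Ucon : connected_graph eU.
Hypothesis Wcon : connected_graph eW.

Lemma cover_dist_le x y : dist eW (phi x) (phi y) <= dist eU x y.
Proof.
rewrite dist_le // ball_cover; apply/existsP; exists y; rewrite eqxx /= -dist_le //.
Qed.

Lemma cover_dist_ex x w : exists2 y, phi y = w & dist eU x y = dist eW (phi x) w.
Proof.
have : dist eW (phi x) w <= dist eW (phi x) w by [].
rewrite dist_le // ball_cover.
move=> /existsP[y /andP[/eqP Hy Hb]]; exists y => //.
apply/eqP; rewrite eqn_leq; rewrite -dist_le // in Hb; rewrite Hb /= -Hy; exact: cover_dist_le.
Qed.

End CoverLemmas.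


Section Antipodal.
Variable U : finType.
Variable K : eqType.
Variable eU : rel U.
Variable F : U -> K.
Hypothesis Hsym : symmetric eU.
Hypothesis econ : connected_graph eU.
Variables cc bb : nat -> nat.
Hypothesis DR : forall x y,
    #|[set z | eU y z & dist eU x z == (dist eU x y).-1]| = cc (dist eU x y) /\
    #|[set z | eU y z & dist eU x z == (dist eU x y).+1]| = bb (dist eU x y).
Hypothesis anti : forall x y, (x == y) || (dist eU x y == diameter eU) = (F x == F y).

Local Notation D := (diameter eU).
Local Notation d := (dist eU).

Lemma dist_leD x y : d x y <= D.
Proof. exact: (@leq_bigmax _ (fun p : U * U => d p.1 p.2) (x, y)). Qed.

Lemma anti_D x y : F x = F y -> x != y -> d x y = D.
Proof. by move=> H Hn; have := anti x y; rewrite H eqxx (negbTE Hn) /= => /eqP. Qed.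

Lemma D_anti x y : d x y = D -> F x = F y.
Proof. by move=> H; have := anti x y; rewrite H eqxx orbT => /esym/eqP. Qed.

Lemma bpos (x0 : U) i : i < D -> 0 < bb i.
Proof.
move=> HiD.
have [[p q] Hpq] : exists pq : U * U, d pq.1 pq.2 = D.
  have H0 : 0 < #|{: U * U}| by apply/card_gt0P; exists (x0, x0).
  have [pq Hpq] := @eq_bigmax _ (fun p : U * U => d p.1 p.2) H0.
  by exists pq.
rewrite /= in Hpq.
have Hex : forall a, a <= D -> exists r, d p r = D - a.
  elim => [|a IH] Ha; first by exists q; rewrite Hpq subn0.
  have [r Hr] := IH (ltnW Ha).
  have Hr' : d p r = (D - a.+1).+1 by rewrite Hr; lia.
  by have [z [_ Hz]] := dist_pred econ Hr'; exists z.
have [r Hr] := Hex (D - i.+1) (leq_subr _ _).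
have Hr' : d p r = i.+1 by rewrite Hr; lia.
have [z [Hzr Hz]] := dist_pred econ Hr'.
rewrite -Hz; have [_ <-] := DR p z; apply/card_gt0P; exists r; rewrite inE Hzr Hz Hr' eqxx. by [].
Qed.

Lemma walk_away u z : exists2 w, d u w = D & d z w = D - d u z.
Proof.
suff H : forall a z, d u z + a = D -> exists2 w, d u w = D & d z w <= a.
  have [w Hw Hzw] := H (D - d u z) z (subnKC (dist_leD u z)).
  exists w => //; apply/eqP; rewrite eqn_leq Hzw /=.
  have := dist_tri econ u z w; rewrite Hw; lia.
elim => [|a IH] {}z Ha.
  by exists z; [rewrite -Ha addn0 | rewrite dist0].
have Hlt : d u z < D by lia.
have := bpos z Hlt; have [_ <-] := DR u z; case/card_gt0P => z' ; rewrite inE => /andP[Hzz' /eqP Hz'].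
have Ha' : d u z' + a = D by rewrite Hz'; lia.
have [w Hw Hz'w] := IH z' Ha'.
exists w => //; apply: leq_trans (dist_shift econ w Hzz') _; by rewrite ltnS.
Qed.

Lemma lemC u0 u z : F u0 = F u -> u0 != u -> 2 * d u0 z <= D -> d u z = D - d u0 z.
Proof.
move=> Hf Hn H2.
have HD := anti_D Hf Hn.
have H1 : D <= d u0 z + d u z by rewrite -HD -(dist_sym Hsym econ z u); exact: dist_tri.
have [w Hw Hzw] := walk_away u z.
have Hfw : F u0 = F w by rewrite Hf; exact: D_anti.
have HuD := dist_leD u z.
case: (eqVneq u0 w) => [Ew|Nw].
  by rewrite -Ew (dist_sym Hsym econ) in Hzw; lia.
have := anti_D Hfw Nw => HD'.
have := dist_tri econ u0 z w; rewrite HD' Hzw. lia.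
Qed.

End Antipodal.


Lemma card_sum (T : finType) (A : pred T) : #|[set z | A z]| = \sum_z A z.
Proof. by rewrite -sum1_card big_mkcond /=; apply: eq_bigr => z _; rewrite inE; case: (A z). Qed.

Lemma card_disj_union (T I : finType) (B : {set I}) (P : I -> T -> bool) (Q : pred T) :
  (forall z u u', u \in B -> u' \in B -> P u z -> P u' z -> u = u') ->
  #|[set z | Q z & [exists u in B, P u z]]| = \sum_(u in B) #|[set z | Q z & P u z]|.
Proof.
move=> Huniq; rewrite (@card_sum T (fun z => Q z && [exists u : I, (u \in B) && P u z])).
rewrite [RHS](eq_bigr (fun u => \sum_z (Q z && P u z))); last by move=> u _; rewrite (@card_sum T (fun z => Q z && P u z)).
rewrite exchange_big /=; apply: eq_bigr => z _.
case: (boolP [exists u in B, P u z]) => [/existsP[u0 /andP[Hu0 Hp0]]|Hn].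
  rewrite (bigD1 u0) //= Hp0 andbT big1 ?addn0 // => u /andP[Hu Hne].
  case: (boolP (P u z)) => Hp; last by rewrite andbF.
  by rewrite (Huniq z u u0) ?eqxx in Hne.
rewrite andbF big1 // => u Hu; case: (boolP (P u z)) => Hp; last by rewrite andbF.
by move: Hn; rewrite negb_exists => /forallP /(_ u); rewrite Hu Hp.
Qed.


Section Quot.
Variables U W : finType.
Variable K : eqType.
Variable eU : rel U.
Variable eW : rel W.
Variable phi : U -> W.
Variable F : U -> K.
Hypothesis Usym : symmetric eU.
Hypothesis Wsym : symmetric eW.
Hypothesis Ucon : connected_graph eU.
Hypothesis Wcon : connected_graph eW.
Hypothesis Uirr : irreflexive eU.
Hypothesis hom : forall x y, eU x y -> eW (phi x) (phi y).
Hypothesis lift : forall x w, eW (phi x) w -> exists2 y, eU x y & phi y = w.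
Hypothesis inj_nb : forall y z z', eU y z -> eU y z' -> phi z = phi z' -> z = z'.
Hypothesis surj : forall w, exists u, phi u = w.
Hypothesis Fphi : forall u u', phi u = phi u' -> F u = F u'.
Variable nn : nat.
Hypothesis Bsize : forall w, #|[set u | phi u == w]| = nn.
Variables cc bb : nat -> nat.
Hypothesis DR : forall x y,
    #|[set z | eU y z & dist eU x z == (dist eU x y).-1]| = cc (dist eU x y) /\
    #|[set z | eU y z & dist eU x z == (dist eU x y).+1]| = bb (dist eU x y).
Hypothesis anti : forall x y, (x == y) || (dist eU x y == diameter eU) = (F x == F y).
Hypothesis D2 : 2 <= diameter eU.

Local Notation D := (diameter eU).
Local Notation d := (dist eU).
Local Notation d' := (dist eW).

Lemma M1 x' u z : phi u = x' -> d' x' (phi z) <= d u z.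
Proof. by move=> <-; apply: cover_dist_le. Qed.

Lemma M2 x' z : exists2 u, phi u = x' & d u z = d' x' (phi z).
Proof.
have [u Hu Hd] := cover_dist_ex hom lift Ucon Wcon z x'.
by exists u => //; rewrite (dist_sym Usym Ucon) Hd (dist_sym Wsym Wcon).
Qed.

Definition cf h := if 2 * h <= D then (if 2 * h == D then nn * cc h else cc h)
  else (if D <= 2 * h - 2 then bb (D - h) else nn * cc h).
Definition bf h := if 2 * h <= D then (if 2 * h + 2 <= D then bb h else bb h - (nn - 1) * cc (D - h))
  else cc (D - h).

Lemma ccDR u y : #|[set z | eU y z & d u z == (d u y).-1]| = cc (d u y).
Proof. by have [] := DR u y. Qed.
Lemma bbDR u y : #|[set z | eU y z & d u z == (d u y).+1]| = bb (d u y).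
Proof. by have [] := DR u y. Qed.

Lemma nbr_lo u y z : eU y z -> d u y <= (d u z).+1.
Proof. exact: nbr_dist. Qed.
Lemma nbr_hi u y z : eU y z -> d u z <= (d u y).+1.
Proof. exact: dist_nbr. Qed.

Lemma Dpos : 0 < D.
Proof. by apply: leq_trans D2. Qed.

Lemma lemC' u0 u z : F u0 = F u -> u0 != u -> 2 * d u0 z <= D -> d u z = D - d u0 z.
Proof. exact: (lemC Usym Ucon DR anti). Qed.

Lemma walk' u z : exists2 w, d u w = D & d z w = D - d u z.
Proof. exact: (walk_away Ucon DR). Qed.

Lemma leD u z : d u z <= D.
Proof. exact: dist_leD. Qed.

Lemma D_anti' x y : d x y = D -> F x = F y.
Proof. exact: (D_anti anti). Qed.

Section Fixed.
Variable x' : W.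
Variable y : U.
Let mu z := d' x' (phi z).
Let B := [set u | phi u == x'].

Lemma inB u : (u \in B) = (phi u == x'). Proof. by rewrite inE. Qed.

Lemma mu_le u z : u \in B -> mu z <= d u z.
Proof. by rewrite inB => /eqP Hu; apply: M1. Qed.

Lemma mu_ex z : exists2 u, u \in B & d u z = mu z.
Proof. by have [u Hu Hd] := M2 x' z; exists u; rewrite ?inB ?Hu. Qed.

Lemma mu_lo z : eU y z -> mu y <= (mu z).+1.
Proof. by move=> Hz; apply: (nbr_dist Wsym Wcon); apply: hom. Qed.

Lemma B_F u u' : u \in B -> u' \in B -> F u = F u'.
Proof. by rewrite !inB => /eqP Hu /eqP Hu'; apply: Fphi; rewrite Hu Hu'. Qed.

Lemma cardB : #|B| = nn. Proof. exact: Bsize. Qed.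

Lemma c_count : #|[set z | eU y z & mu z == (mu y).-1]| = cf (mu y).
Proof.
have := mu_lo; move Eh: (mu y) => h Hlo.
have [u0 Hu0 Hd0] := mu_ex y; rewrite Eh in Hd0.
have hD : h <= D by rewrite -Hd0; exact: leD.
rewrite /cf; case: ifP => H2h.
-
  have Hoth : forall u, u \in B -> u != u0 -> d u y = D - h.
    move=> u Hu Hne; rewrite -Hd0; apply: lemC'; first exact: B_F.
      by rewrite eq_sym. by rewrite Hd0.
  case: (posnP h) => [h0|hpos].
  + rewrite h0 /=.
    have -> : 2 * 0 == D = false by apply/negbTE; rewrite muln0 eq_sym -lt0n Dpos.
    have Hy : y = u0 by apply/esym/(dist_eq0 Ucon); rewrite Hd0.
    transitivity 0.
      apply/eqP; rewrite cards_eq0; apply/eqP/setP => z; rewrite !inE.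
      apply/negbTE/negP => /andP[Hyz /eqP Hmz].
      have [u Hu Hdu] := mu_ex z; rewrite Hmz in Hdu.
      have Hz := dist_eq0 Ucon Hdu; subst z.
      have HF : F u0 = F u by exact: B_F Hu0 Hu.
      have Hne : u0 != u by apply/eqP => E; rewrite -E -Hy Uirr in Hyz.
      have := anti_D anti HF Hne; have := nbr_hi u0 Hyz; rewrite -Hy dist0 //.
      move: D2; lia.
    have := ccDR y y; rewrite dist0 //= => <-.
    apply/esym/eqP; rewrite cards_eq0; apply/eqP/setP => z; rewrite !inE.
    apply/negbTE/negP => /andP[Hyz /eqP /(dist_eq0 Ucon) E]; subst z; by rewrite Uirr in Hyz.
  + have Hset : [set z | eU y z & mu z == h.-1] = [set z | eU y z & [exists u in B, d u z == h.-1]].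
      apply/setP => z; rewrite !inE; case: (boolP (eU y z)) => //= Hyz.
      apply/eqP/existsP => [Hm|[u /andP[Hu /eqP Hdu]]].
        by have [u Hu Hdu] := mu_ex z; exists u; rewrite Hu Hdu Hm eqxx.
      apply/eqP; rewrite eqn_leq -{1}Hdu mu_le //=; have := Hlo _ Hyz; lia.
    rewrite Hset card_disj_union; last first.
      move=> z u u' Hu Hu' /eqP Hdu /eqP Hdu'; case: (eqVneq u u') => [//|Hne].
      have Hle : 2 * d u z <= D by rewrite Hdu; move: H2h; lia.
      have := lemC' (B_F Hu Hu') Hne Hle; rewrite Hdu Hdu'; move: H2h; lia.
    case: ifP => Heq.
    * move/eqP: Heq => Heq.
      rewrite (eq_bigr (fun _ => cc h)); first by rewrite sum_nat_const cardB.
      move=> u Hu; have -> : h = d u y.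
        case: (eqVneq u u0) => [->|Hne]; first by [].
        by rewrite Hoth //; move: Heq; lia.
      exact: ccDR.
    * move/negbT/eqP: Heq => Heq.
      rewrite (bigD1 u0) //= big1 ?addn0; first by rewrite -Hd0 ccDR.
      move=> u /andP[Hu Hne]; apply/eqP; rewrite cards_eq0; apply/eqP/setP => z; rewrite !inE.
      apply/negbTE/negP => /andP[Hyz /eqP Hdz].
      have := nbr_lo u Hyz; rewrite Hoth // Hdz; move: H2h Heq hpos; lia.
-
  move/negbT: H2h; rewrite -ltnNge => H2h.
  have [us Hus Hdus] := walk' u0 y.
  rewrite Hd0 in Hdus.
  have HFs : F u0 = F us by apply: D_anti'.
  have Hnes : u0 != us by apply/eqP => E; rewrite -E dist0 // in Hus; move: Dpos; lia.
  have Hdus' : d us y = D - h by rewrite (dist_sym Usym Ucon).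
  have Hoth : forall u, F us = F u -> us != u -> d u y = h.
    move=> u HF Hne; rewrite (lemC' HF Hne) Hdus'; last by move: H2h; lia.
    have := leD u0 y; rewrite Hd0; lia.
  have HusB : us \notin B.
    apply/negP => Hb; have := mu_le y Hb; rewrite Hdus' Eh; move: H2h; lia.
  have HB : forall u, u \in B -> us != u /\ F us = F u.
    move=> u Hu; split; first by apply/eqP => E; rewrite E Hu in HusB.
    by rewrite -HFs; apply: B_F.
  have hpos : 0 < h by move: H2h D2; lia.
  case: ifP => Hsub.
  + have -> : [set z | eU y z & mu z == h.-1] = [set z | eU y z & d us z == (d us y).+1].
      apply/setP => z; rewrite !inE; case: (boolP (eU y z)) => //= Hyz.
      rewrite Hdus'; apply/eqP/eqP => [Hm|Hz].
        have [u Hu Hdu] := mu_ex z; have [Hne HF] := HB u Hu.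
        have := nbr_hi us Hyz; rewrite Hdus' => Hhi.
        apply/eqP; rewrite eqn_leq Hhi /= ltnNge; apply/negP => Hle.
        have Hle2 : 2 * d us z <= D by move: H2h Hsub Hle; lia.
        have := lemC' HF Hne Hle2; rewrite Hdu Hm; have := nbr_lo us Hyz; rewrite Hdus'; move: H2h Hsub Hle; lia.
      have [u Hu Hdu] := mu_ex z; have [Hne HF] := HB u Hu.
      rewrite -Hdu (lemC' HF Hne) Hz; move: H2h Hsub; lia.
    by rewrite bbDR Hdus'.
  + move/negbT: Hsub; rewrite -ltnNge => Hsub.
    have Hset : [set z | eU y z & mu z == h.-1] = [set z | eU y z & [exists u in B, d u z == h.-1]].
      apply/setP => z; rewrite !inE; case: (boolP (eU y z)) => //= Hyz.
      apply/eqP/existsP => [Hm|[u /andP[Hu /eqP Hdu]]].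
        by have [u Hu Hdu] := mu_ex z; exists u; rewrite Hu Hdu Hm eqxx.
      apply/eqP; rewrite eqn_leq -{1}Hdu mu_le //=; have := Hlo _ Hyz; lia.
    rewrite Hset card_disj_union; last first.
      move=> z u u' Hu Hu' /eqP Hdu /eqP Hdu'; case: (eqVneq u u') => [//|Hne].
      have Hle : 2 * d u z <= D by rewrite Hdu; move: H2h Hsub; lia.
      have := lemC' (B_F Hu Hu') Hne Hle; rewrite Hdu Hdu'; move: H2h Hsub; lia.
    rewrite (eq_bigr (fun _ => cc h)); first by rewrite sum_nat_const cardB.
    move=> u Hu; have [Hne HF] := HB u Hu; rewrite -(Hoth u HF Hne); exact: ccDR.
Qed.

Lemma b_count : #|[set z | eU y z & mu z == (mu y).+1]| = bf (mu y).
Proof.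
have := mu_lo; move Eh: (mu y) => h Hlo.
have [u0 Hu0 Hd0] := mu_ex y; rewrite Eh in Hd0.
have hD : h <= D by rewrite -Hd0; exact: leD.
have Hhi : forall z, eU y z -> mu z <= h.+1.
  move=> z Hyz; apply: leq_trans (mu_le z Hu0) _; rewrite -Hd0; exact: nbr_hi.
rewrite /bf; case: ifP => H2h.
- have Hoth : forall u, u \in B -> u != u0 -> d u y = D - h.
    move=> u Hu Hne; rewrite -Hd0; apply: lemC'; first exact: B_F.
      by rewrite eq_sym. by rewrite Hd0.
  case: ifP => H22.
  + have -> : [set z | eU y z & mu z == h.+1] = [set z | eU y z & d u0 z == (d u0 y).+1].
      apply/setP => z; rewrite !inE; case: (boolP (eU y z)) => //= Hyz.
      rewrite Hd0; apply/eqP/eqP => [Hm|Hz].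
        apply/eqP; rewrite eqn_leq -{2}Hm mu_le //= andbT -Hd0; exact: nbr_hi.
      have [u Hu Hdu] := mu_ex z; have := mu_le z Hu0; rewrite Hz -Hdu => Hle.
      case: (eqVneq u u0) => [E|Hne]; first by rewrite E Hz.
      have Hle2 : 2 * d u0 z <= D by rewrite Hz; lia.
      have Hne' : u0 != u by rewrite eq_sym.
      have := lemC' (B_F Hu0 Hu) Hne' Hle2.
      rewrite Hz => E; rewrite E; move: Hle; rewrite E; lia.
    by rewrite bbDR Hd0.
  + move/negbT: H22; rewrite -ltnNge => H22.
    have hpos : 0 < h by move: D2 H22 H2h; lia.
    set A := [set z | eU y z & d u0 z == (d u0 y).+1].
    set X := [set z | eU y z & [exists u in B :\ u0, d u z == D - h - 1]].
    have HXA : X \subset A.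
      apply/subsetP => z; rewrite !inE => /andP[Hyz /existsP[u /andP[Hu /eqP Hdu]]].
      rewrite Hyz /= Hd0; move: Hu; rewrite in_setD1 => /andP[Hne Hu].
      have Hle2 : 2 * d u z <= D by rewrite Hdu; lia.
      rewrite (lemC' (B_F Hu Hu0) Hne Hle2) Hdu; apply/eqP; lia.
    have -> : [set z | eU y z & mu z == h.+1] = A :\: X.
      apply/setP => z; rewrite !inE; case: (boolP (eU y z)) => //= Hyz.
      rewrite Hd0; apply/eqP/andP => [Hm|[Hn /eqP Hz]].
        have Hz : d u0 z = h.+1.
          apply/eqP; rewrite eqn_leq -{2}Hm mu_le //= andbT -Hd0; exact: nbr_hi.
        split; last by rewrite Hz.
        apply/negP => /existsP[u /andP[Hu /eqP Hdu]]; move: Hu; rewrite in_setD1 => /andP[_ Hu].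
        have := mu_le z Hu; rewrite Hdu Hm; lia.
      have [u Hu Hdu] := mu_ex z; rewrite -Hdu.
      case: (eqVneq u u0) => [->//|Hne].
      have [w Hw Hzw] := walk' u0 z.
      have HFw : F u0 = F w by apply: D_anti'.
      have Hnw : u0 != w by apply/eqP => E; rewrite -E dist0 // in Hw; move: Dpos; lia.
      case: (eqVneq w u) => [Ewu|Hwu].
        exfalso; move: Hn; rewrite negb_exists => /forallP /(_ u); rewrite in_setD1 Hne Hu /=.
        by rewrite -Ewu (dist_sym Usym Ucon) Hzw Hz; apply/negP; rewrite negbK; apply/eqP; lia.
      have HFwu : F w = F u by rewrite -HFw; apply: B_F.
      have Hle2 : 2 * d w z <= D by rewrite (dist_sym Usym Ucon) Hzw Hz; lia.
      by rewrite (lemC' HFwu Hwu Hle2) (dist_sym Usym Ucon) Hzw Hz; lia.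
    rewrite cardsD (setIidPr HXA) /A bbDR Hd0; congr (_ - _).
    rewrite /X card_disj_union; last first.
      move=> z u u' Hu Hu' /eqP Hdu /eqP Hdu'; case: (eqVneq u u') => [//|Hne].
      move: Hu Hu'; rewrite !in_setD1 => /andP[_ Hu] /andP[_ Hu'].
      have Hle : 2 * d u z <= D by rewrite Hdu; lia.
      have := lemC' (B_F Hu Hu') Hne Hle; rewrite Hdu Hdu'; lia.
    rewrite (eq_bigr (fun _ => cc (D - h))); last first.
      move=> u; rewrite in_setD1 => /andP[Hne Hu].
      have E : D - h - 1 = (d u y).-1 by rewrite Hoth //; lia.
      by rewrite E ccDR Hoth.
    rewrite sum_nat_const; congr (_ * _).
    have := cardsD1 u0 B; rewrite Hu0 cardB; lia.
- move/negbT: H2h; rewrite -ltnNge => H2h.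
  have [us Hus Hdus] := walk' u0 y.
  rewrite Hd0 in Hdus.
  have HFs : F u0 = F us by apply: D_anti'.
  have Hnes : u0 != us by apply/eqP => E; rewrite -E dist0 // in Hus; move: Dpos; lia.
  have Hdus' : d us y = D - h by rewrite (dist_sym Usym Ucon).
  have HusB : us \notin B.
    apply/negP => Hb; have := mu_le y Hb; rewrite Hdus' Eh; move: H2h; lia.
  have HB : forall u, u \in B -> us != u /\ F us = F u.
    move=> u Hu; split; first by apply/eqP => E; rewrite E Hu in HusB.
    by rewrite -HFs; apply: B_F.
  have -> : [set z | eU y z & mu z == h.+1] = [set z | eU y z & d us z == (d us y).-1].
    apply/setP => z; rewrite !inE; case: (boolP (eU y z)) => //= Hyz.
    rewrite Hdus'; apply/eqP/eqP => [Hm|Hz].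
      have hD1 : h.+1 <= D.
        have [u Hu Hdu] := mu_ex z; rewrite -Hm -Hdu; exact: leD.
      have Hz0 : d u0 z = h.+1.
        apply/eqP; rewrite eqn_leq -{2}Hm mu_le //= andbT -Hd0; exact: nbr_hi.
      have [w Hw Hzw] := walk' u0 z.
      have HFw : F us = F w by rewrite -HFs; apply: D_anti'.
      rewrite Hz0 in Hzw.
      case: (eqVneq us w) => [->|Hnw].
        by rewrite (dist_sym Usym Ucon) Hzw; lia.
      exfalso.
      have Hle2 : 2 * d w z <= D by rewrite (dist_sym Usym Ucon) Hzw; lia.
      have Hnw' : w != us by rewrite eq_sym.
      have := lemC' (esym HFw) Hnw' Hle2.
      rewrite [d w z](dist_sym Usym Ucon) Hzw => E.
      have := nbr_hi us Hyz; rewrite E Hdus'; lia.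
    have tpos : 0 < D - h.
      case: (posnP (D - h)) => // H0; rewrite H0 /= in Hz.
      have E1 := dist_eq0 Ucon Hz; rewrite H0 in Hdus'; have E2 := dist_eq0 Ucon Hdus'.
      by rewrite -E1 E2 Uirr in Hyz.
    have [u Hu Hdu] := mu_ex z; have [Hne HF] := HB u Hu.
    have Hle2 : 2 * d us z <= D by rewrite Hz; lia.
    rewrite -Hdu (lemC' HF Hne Hle2) Hz; lia.
  by rewrite ccDR Hdus'.
Qed.

End Fixed.
Lemma nb_image (y : U) (P : pred W) :
  #|[set z' | eW (phi y) z' & P z']| = #|[set z | eU y z & P (phi z)]|.
Proof.
rewrite -(@card_in_imset _ _ phi (mem [set z | eU y z & P (phi z)])); last first.
  move=> z z'; rewrite !inE => /andP[Hz _] /andP[Hz' _] E; exact: (inj_nb Hz Hz' E).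
apply: eq_card => z'; rewrite inE; apply/andP/imsetP.
  move=> [Hyz HP]; have [z Hz Ez] := lift Hyz; exists z; last by [].
  by rewrite inE Hz Ez.
by move=> [z]; rewrite inE => /andP[Hz HP] ->; rewrite hom.
Qed.

Lemma W_DR : distance_regular eW.
Proof.
split => //; exists cf, bf => x' y'.
have [y <-] := surj y'.
rewrite (nb_image y (fun z' => d' x' z' == (d' x' (phi y)).-1)).
rewrite (nb_image y (fun z' => d' x' z' == (d' x' (phi y)).+1)).
split; [exact: c_count | exact: b_count].
Qed.

Variable FW : W -> K.
Hypothesis FWphi : forall u, FW (phi u) = F u.
Hypothesis pairW : exists x', exists y', x' != y' /\ FW x' = FW y'.

Lemma W_leD x' y' : d' x' y' <= D.
Proof. have [y <-] := surj y'; have [u _ <-] := M2 x' y; exact: leD. Qed.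

Lemma W_antiD x' y' : x' != y' -> (d' x' y' == D) = (FW x' == FW y').
Proof.
have [y <-] := surj y' => Hne.
apply/eqP/eqP => [H|H].
  have [u Hu Hdu] := M2 x' y; rewrite H in Hdu.
  by rewrite -Hu !FWphi; apply: D_anti'.
have [u Hu Hdu] := M2 x' y; rewrite -Hdu; apply: (anti_D anti).
  by rewrite -!FWphi Hu.
by apply/eqP => E; rewrite -Hu E eqxx in Hne.
Qed.

Lemma W_diam : diameter eW = D.
Proof.
apply/eqP; rewrite eqn_leq; apply/andP; split.
  by apply/bigmax_leqP => p _; apply: W_leD.
have [x' [y' [Hne HF]]] := pairW.
have : d' x' y' == D by rewrite W_antiD // HF.
move=> /eqP <-; exact: (@leq_bigmax _ (fun p : W * W => d' p.1 p.2) (x', y')).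
Qed.

Lemma W_anti x' y' : (x' == y') || (d' x' y' == diameter eW) = (FW x' == FW y').
Proof.
rewrite W_diam; case: (eqVneq x' y') => [->|Hne]; first by rewrite !eqxx.
by rewrite /= W_antiD.
Qed.

End Quot.


Lemma connect_map (U W : finType) (eU : rel U) (eW : rel W) (f : U -> W) :
  (forall x y, eU x y -> eW (f x) (f y)) ->
  forall x y, connect eU x y -> connect eW (f x) (f y).
Proof.
move=> hom x y /connectP [p Hp ->]; elim: p x Hp => [|a p IH] x /=; first by rewrite connect0.
move=> /andP[Hxa Hp]; apply: connect_trans (connect1 (hom _ _ Hxa)) (IH _ Hp).
Qed.

Section Main.
Variables (V : finType) (e t : rel V) (m n : nat).
Variables (pi : V -> V -> {perm 'I_(m * n)}) (b : 'I_(m * n) -> 'I_m) (sigma : V -> V -> {perm 'I_m}).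
Hypothesis Hsimple : simple_graph e.
Hypothesis Hncomp : ~ complete_graph e.
Hypothesis Hfund : fund_rep e t pi.
Hypothesis Hm : 1 < m.
Hypothesis Hn : 1 < n.
Hypothesis Hb : forall k, #|[set i | b i == k]| = n.
Hypothesis Hcomp : forall v w i, e v w -> b (pi v w i) = sigma v w (b i).
Hypothesis HDR : distance_regular (cover_graph e pi).
Hypothesis Hanti : antipodal_cover e (cover_graph e pi) fst (m * n).

Local Notation eU := (cover_graph e pi).
Local Notation eW := (cover_graph e sigma).
Local Notation phi := (fun p : V * 'I_(m * n) => (p.1, b p.2)).

Lemma esymV : symmetric e. Proof. by case: Hsimple. Qed.
Lemma eirrV : irreflexive e. Proof. by case: Hsimple. Qed.

Lemma pi_inv v w i : e v w -> pi w v (pi v w i) = i.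
Proof. by case: Hfund => _ H _ Hvw; rewrite -permM H // perm1. Qed.

Lemma pi_tri x y z i : e x y -> e y z -> e z x -> pi y z (pi x y i) = pi x z i.
Proof.
case: Hfund => _ Hinv Htri Hxy Hyz Hzx.
have H1 := pi_inv (pi y z (pi x y i)) Hzx.
have := congr1 (fun p : {perm _} => p i) (Htri x y z Hxy Hyz Hzx).
rewrite !permM perm1 /= => H2; by rewrite -H1 H2.
Qed.

Lemma b_surj k : exists i, b i = k.
Proof.
have : 0 < #|[set i | b i == k]| by rewrite Hb; apply: ltn_trans Hn.
by case/card_gt0P => i; rewrite inE => /eqP; exists i.
Qed.

Lemma sig_inv v w k : e v w -> sigma w v (sigma v w k) = k.
Proof.
move=> Hvw; have [i <-] := b_surj k.
rewrite -(Hcomp i Hvw) -(Hcomp _ (_ : e w v)); last by rewrite esymV.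
by rewrite pi_inv.
Qed.

Lemma sig_tri x y z k : e x y -> e y z -> e z x -> sigma y z (sigma x y k) = sigma x z k.
Proof.
move=> Hxy Hyz Hzx; have [i <-] := b_surj k.
have Hxz : e x z by rewrite esymV.
rewrite -(Hcomp i Hxy) -(Hcomp _ Hyz) -(Hcomp i Hxz).
by rewrite pi_tri.
Qed.

Lemma eU_sym : symmetric eU.
Proof.
move=> [v i] [w j]; rewrite /cover_graph /= esymV.
case: (boolP (e w v)) => //= Hwv.
have Hvw : e v w by rewrite esymV.
apply/eqP/eqP => [->|->]; by rewrite pi_inv.
Qed.

Lemma eW_sym : symmetric eW.
Proof.
move=> [v i] [w j]; rewrite /cover_graph /= esymV.
case: (boolP (e w v)) => //= Hwv.
have Hvw : e v w by rewrite esymV.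
apply/eqP/eqP => [->|->]; by rewrite sig_inv.
Qed.

Lemma eU_irr : irreflexive eU.
Proof. by move=> [v i]; rewrite /cover_graph /= eirrV. Qed.

Lemma Ucon : connected_graph eU.
Proof. by case: Hanti. Qed.

Lemma homUW x y : eU x y -> eW (phi x) (phi y).
Proof.
case: x y => [v i] [w j]; rewrite /cover_graph /= => /andP[Hvw /eqP ->].
by rewrite Hvw (Hcomp _ Hvw) eqxx.
Qed.

Lemma liftUW x w : eW (phi x) w -> exists2 y, eU x y & phi y = w.
Proof.
case: x w => [v i] [w l]; rewrite /cover_graph /= => /andP[Hvw /eqP ->].
exists (w, pi v w i); first by rewrite /cover_graph /= Hvw eqxx.
by rewrite /= (Hcomp _ Hvw).
Qed.

Lemma Wcon : connected_graph eW.
Proof.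
move=> [v k] [w l].
have [i Hi] := b_surj k; have [j Hj] := b_surj l.
have := connect_map homUW (Ucon (v, i) (w, j)); by rewrite /= Hi Hj.
Qed.

Lemma inj_nbU y z z' : eU y z -> eU y z' -> phi z = phi z' -> z = z'.
Proof.
case: y z z' => [v i] [w j] [w' j']; rewrite /cover_graph /= => /andP[_ /eqP ->] /andP[_ /eqP ->].
by case=> ->.
Qed.

Lemma surjUW w : exists u, phi u = w.
Proof. by case: w => v k; have [i Hi] := b_surj k; exists (v, i); rewrite /= Hi. Qed.

Lemma BsizeUW w : #|[set u | phi u == w]| = n.
Proof.
case: w => v k; transitivity #|[set i | b i == k]|; last exact: Hb.
rewrite -(@card_in_imset _ _ (fun i => (v, i)) (mem [set i | b i == k])).
  apply: eq_card => [[w i]]; rewrite !inE; apply/idP/imsetP.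
    by move=> /eqP [-> Hbi]; exists i => //; rewrite inE Hbi.
  by move=> [i' Hi' [-> ->]]; rewrite inE in Hi'; rewrite /= (eqP Hi').
by move=> i i' _ _ [].
Qed.

Lemma antiU x y : (x == y) || (dist eU x y == diameter eU) = (x.1 == y.1).
Proof. by case: Hanti => _ _ _ H; apply: H. Qed.

Lemma FphiUW u u' : phi u = phi u' -> u.1 = u'.1.
Proof. by case=> ->. Qed.

Lemma exists_nonadj : exists v, exists w, v != w /\ ~~ e v w.
Proof.
have : ~~ [forall v, forall w, (v != w) ==> e v w].
  apply/negP => /forallP H; apply: Hncomp => v w Hne.
  by move: (H v) => /forallP /(_ w); rewrite Hne.
rewrite negb_forall => /existsP[v]; rewrite negb_forall => /existsP[w].
by rewrite negb_imply => /andP[Hne Hnvw]; exists v, w.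
Qed.

Definition k0 : 'I_m := Ordinal (ltnW Hm).
Definition k1 : 'I_m := Ordinal Hm.

Lemma D2U : 2 <= diameter eU.
Proof.
have [v [w [Hne Hnvw]]] := exists_nonadj.
have [i0 _] := b_surj k0.
have HD := dist_leD eU (v, i0) (w, i0).
apply: leq_trans HD.
case E: (dist eU (v, i0) (w, i0)) => [|[|dd]] //.
  by have := dist_eq0 Ucon E; case=> Evw; rewrite Evw eqxx in Hne.
have [z [Hz Hz0]] := dist_pred Ucon E.
have := dist_eq0 Ucon Hz0 => Ez; subst z.
by move: Hz; rewrite /cover_graph /= (negbTE Hnvw).
Qed.

Lemma pairW : exists x' : V * 'I_m, exists y', x' != y' /\ x'.1 = y'.1.
Proof.
have [v _] := exists_nonadj.
exists (v, k0), (v, k1); split => //.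
by rewrite xpair_eqE negb_and eqxx /=.
Qed.

Lemma cover1 : is_rcover eW eU phi n.
Proof.
split; last exact: BsizeUW.
split.
- exact: surjUW.
- move=> [v i] [w j] /= [-> _]; by rewrite /cover_graph /= eirrV.
- move=> x y _ H; apply/negP => Hxy; move: H; by rewrite homUW.
- move=> x w' Hxw; have [y Hy Ey] := liftUW Hxw.
  rewrite -(cards1 y); apply: eq_card => z; rewrite !inE.
  apply/andP/eqP => [[/eqP Ez Hz]|->]; last by rewrite Ey eqxx Hy.
  by apply: (inj_nbU Hz Hy); rewrite Ez Ey.
- move=> [v i] [w j] [u l] /=; rewrite /cover_graph /=.
  move=> /andP[Hvw _] /andP[Hwu _] /andP[Huv _] /andP[_ /eqP Ej] /andP[Hvu /eqP El].
  by rewrite Hwu Ej El pi_tri ?eqxx.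
Qed.

Lemma cover2 : is_rcover e eW fst m.
Proof.
split.
  split.
  - by move=> v; exists (v, k0).
  - by move=> [v i] [w j] /= ->; rewrite /cover_graph /= eirrV.
  - by move=> [v i] [w j] /= _ H; rewrite /cover_graph /= (negbTE H).
  - move=> [v k] w /= Hvw; rewrite -(cards1 (w, sigma v w k)); apply: eq_card => [[w' l]].
    rewrite !inE /cover_graph /=; apply/andP/eqP => [[/eqP -> /andP[_ /eqP ->]]|[-> ->]] //.
    by rewrite eqxx Hvw eqxx.
  - move=> [v i] [w j] [u l] /=; rewrite /cover_graph /=.
    move=> Hvw Hwu Huv /andP[_ /eqP Ej] /andP[Hvu /eqP El].
    by rewrite Hwu Ej El sig_tri ?eqxx.
move=> v; rewrite -[RHS](card_ord m) -(@card_imset _ _ (fun k : 'I_m => (v, k))); last by move=> k k' [].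
apply: eq_card => [[w k]]; rewrite !inE; apply/eqP/imsetP => [/= ->|[k' _ [-> _]]] //.
by exists k.
Qed.

Lemma main_conj :
  is_rcover eW eU phi n /\ distance_regular eW /\ antipodal_cover e eW fst m.
Proof.
case: HDR => _ [cc [bb DRc]].
split; first exact: cover1.
split.
  exact: (W_DR (F := fst) eU_sym eW_sym Ucon Wcon eU_irr homUW liftUW inj_nbU surjUW FphiUW BsizeUW DRc antiU D2U).
split => //; first exact: Wcon; first exact: cover2.
move=> x y.
exact: (W_anti eU_sym eW_sym Ucon Wcon homUW liftUW surjUW antiU (FW := fst) (fun u => erefl) pairW).
Qed.

End Main.


Theorem theorem3p1 (V : finType) (e t : rel V) (m n : nat)
  (pi : V -> V -> {perm 'I_(m * n)}) (b : 'I_(m * n) -> 'I_m)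
  (sigma : V -> V -> {perm 'I_m}) :
  simple_graph e -> connected_graph e -> ~ complete_graph e ->
  distance_regular e ->
  spanning_tree e t -> fund_rep e t pi ->
  [transitive rep_group e pi, on [set: 'I_(m * n)] | 'P] ->
  1 < m -> 1 < n ->
  (forall k, #|[set i | b i == k]| = n) ->
  (forall v w i, e v w -> b (pi v w i) = sigma v w (b i)) ->
  distance_regular (cover_graph e pi) ->
  antipodal_cover e (cover_graph e pi) fst (m * n) ->
  is_rcover (cover_graph e sigma) (cover_graph e pi) (fun p => (p.1, b p.2)) n /\
  distance_regular (cover_graph e sigma) /\
  antipodal_cover e (cover_graph e sigma) fst m.
Proof.
move=> Hs _ Hnc _ _ Hf _ Hm Hn Hb Hcomp HDR Hanti.
exact: (main_conj Hs Hnc Hf Hm Hn Hb Hcomp HDR Hanti).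
Qed.
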